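(* Let $a,b,n$ be positive integers and $h(j)=aj^n+b$ for $j\ge0$, $h(j)=0$ for $j<0$. Then: (1) if $a<3b$, then $\operatorname{hdepth}(h)=\lfloor a/b\rfloor+1$; (2) if $a\ge 3b$, then $\operatorname{hdepth}(h)\ge 3$.
   Context: For a nonzero function $h:\mathbb Z\to\mathbb Z_{\ge 0}$ with $h(j)=0$ for all sufficiently negative $j$, and integers $k\le d$, set $\beta_k^d(h)=\sum_{j\le k}(-1)^{k-j}\binom{d-j}{k-j}h(j)$, and $\operatorname{hdepth}(h)=\max\{d\in\mathbb Z:\ \beta_k^d(h)\ge 0\text{ for all integers }k\le d\}$. *)

(* Defs.v *)
From mathcomp Require Import all_boot all_order all_algebra.
Set Implicit Arguments. Unset Strict Implicit. Unset Printing Implicit Defensive.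
Import Order.TTheory GRing.Theory Num.Theory.
Local Open Scope ring_scope.

(* beta_k^d(h) = sum_{j <= k} (-1)^(k-j) C(d-j, k-j) h(j), for h : Z -> Z_{>=0}
   vanishing below [lo]; the sum therefore ranges over lo <= j <= k
   (and is the empty sum 0 when k < lo).  For k <= d and j <= k the
   quantities d-j, k-j are nonnegative, so the nat binomial is exact. *)
Definition beta (lo : int) (h : int -> int) (k d : int) : int :=
  if lo <= k then
    \sum_(i < `|(k - lo + 1)%R|%N)
       ((-1) ^+ `|(k - (lo + i%:Z))%R|%N
        * ('C(`|(d - (lo + i%:Z))%R|%N, `|(k - (lo + i%:Z))%R|%N))%:R
        * h (lo + i%:Z))
  else 0.

Definition hdepth_ok (lo : int) (h : int -> int) (d : int) : Prop :=
  forall k : int, k <= d -> 0 <= beta lo h k d.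

Definition is_hdepth (lo : int) (h : int -> int) (d : int) : Prop :=
  hdepth_ok lo h d /\ forall d' : int, hdepth_ok lo h d' -> d' <= d.

(* Main.v *)
Require Import Defs.
From mathcomp Require Import all_boot all_order all_algebra zify ring lra.
From Stdlib Require Import Classical.
Import Order.TTheory GRing.Theory Num.Theory.
Local Open Scope ring_scope.

Local Arguments binomial : simpl nomatch.

Lemma betaE (h : int -> int) (m D : nat) : (m <= D)%N -> beta 0 h m%:Z D%:Z =
  \sum_(i < m.+1) (-1)^+(m - i)%N * ('C(D - i, m - i))%:R * h i%:Z.
Proof.
move=> hmD.
rewrite /beta lez_nat leq0n subr0 (_ : m%:Z + 1 = m.+1%:Z); last by rewrite -addn1.
rewrite absz_nat; apply: eq_bigr => i _.
have hi : (i <= m)%N by rewrite -ltnS.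
by rewrite add0r subzn // absz_nat subzn ?(leq_trans hi).
Qed.

Lemma ok_of (h : int -> int) (d : nat) :
  (forall m, (m <= d)%N -> 0 <= beta 0 h m%:Z d%:Z) -> hdepth_ok 0 h d%:Z.
Proof. by move=> H [m|m] hk; [apply: H | rewrite /beta]. Qed.

Lemma ok3 (h : int -> int) (a b X Y : int) : h 0 = b -> h 1 = a + b ->
  h 2 = a * X + b -> h 3 = a * Y + b -> 0 <= b -> 2 * b <= a -> 2 <= X -> X <= Y ->
  hdepth_ok 0 h 3.
Proof.
move=> h0 h1 h2 h3 hb hab hX hXY; apply: (@ok_of h 3) => m.
case: m => [|[|[|[|m]]]] // _; rewrite betaE // !big_ord_recr big_ord0 /=;
  rewrite ?subSS ?subn0 ?subnn /= ?exprS ?expr0 ?h0 ?h1 ?h2 ?h3; nia.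
Qed.

Lemma ok2 (h : int -> int) (a b X : int) : h 0 = b -> h 1 = a + b ->
  h 2 = a * X + b -> 0 <= b -> b <= a -> 2 <= X -> hdepth_ok 0 h 2.
Proof.
move=> h0 h1 h2 hb hab hX; apply: (@ok_of h 2) => m.
case: m => [|[|[|m]]] // _; rewrite betaE // !big_ord_recr big_ord0 /=;
  rewrite ?subSS ?subn0 ?subnn /= ?exprS ?expr0 ?h0 ?h1 ?h2; nia.
Qed.

Lemma ok1 (h : int -> int) (a b : int) : h 0 = b -> h 1 = a + b ->
  0 <= b -> 0 <= a -> hdepth_ok 0 h 1.
Proof.
move=> h0 h1 hb ha; apply: (@ok_of h 1) => m.
case: m => [|[|m]] // _; rewrite betaE // !big_ord_recr big_ord0 /=;
  rewrite ?subSS ?subn0 ?subnn /= ?exprS ?expr0 ?h0 ?h1; nia.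
Qed.

Lemma upper (h : int -> int) (a b : nat) : (0 < b)%N -> h 0 = b%:Z ->
  h 1 = a%:Z + b%:Z -> forall d, hdepth_ok 0 h d -> d <= (a %/ b)%N%:Z + 1.
Proof.
move=> hb h0 h1 [D|D] H; last by [].
case: D H => [|D] H; first by [].
have : 0 <= beta 0 h 1 D.+1 by apply: H; rewrite lez_nat.
rewrite betaE // !big_ord_recr big_ord0 /= ?subSS ?subn0 ?subnn /= ?exprS ?expr0 h0 h1 bin1 bin0.
move=> Hi.
have HD : (D * b <= a)%N by lia.
rewrite -(leq_divRL _ _ hb) in HD.
lia.
Qed.

Lemma ex_max (P : int -> Prop) d0 M : P d0 -> (forall d, P d -> d <= M) ->
  exists d, P d /\ forall d', P d' -> d' <= d.
Proof.
move=> Pd0 HM.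
suff: forall n d0, P d0 -> M - d0 <= n%:Z -> exists d, P d /\ forall d', P d' -> d' <= d.
  by move=> /(_ `|M - d0|%N d0 Pd0); apply; rewrite abszE ler_norm.
elim=> [|n IH] d1 P1 Hn.
  exists d1; split => // d' Pd'; have := HM _ Pd'; have := HM _ P1; lia.
case: (classic (exists d', P d' /\ d1 < d')) => [[d' [Pd' lt]]|nex].
  by apply: (IH d') => //; lia.
exists d1; split => // d' Pd'; rewrite leNgt; apply/negP => lt; apply: nex; by exists d'.
Qed.

Theorem proposition3p3 (a b n : nat) (ha : (0 < a)%N) (hb : (0 < b)%N) (hn : (0 < n)%N) :
  let h : int -> int := fun j => if 0 <= j then a%:Z * j ^+ n + b%:Z else 0 in
  ((a < 3 * b)%N -> is_hdepth 0 h ((a %/ b)%N%:Z + 1)) /\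
  ((3 * b <= a)%N -> exists d : int, is_hdepth 0 h d /\ 3 <= d).
Proof.
move=> h.
have h0 : h 0 = b%:Z by rewrite /h /= expr0n gtn_eqF // mulr0 add0r.
have h1 : h 1 = a%:Z + b%:Z by rewrite /h /= expr1n mulr1.
have h2 : h 2 = a%:Z * 2 ^+ n + b%:Z by [].
have h3 : h 3 = a%:Z * 3 ^+ n + b%:Z by [].
have hX : 2 <= (2 : int) ^+ n by apply: ler_eXnr.
have hXY : (2 : int) ^+ n <= 3 ^+ n by apply: lerXn2r.
have up := @upper h a b hb h0 h1.
split.
- move=> hab; split; last exact: up.
  rewrite (_ : (a %/ b)%N%:Z + 1 = (a %/ b).+1%:Z); last by rewrite -addn1.
  have : (a %/ b < 3)%N by rewrite ltn_divLR.
  have hq := leq_divM a b.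
  case: (a %/ b)%N hq => [|[|[|q]]] hq // _ /=.
  + apply: (@ok1 h _ _ h0 h1) => //; lia.
  + apply: (@ok2 h _ _ _ h0 h1 h2) => //; lia.
  + apply: (@ok3 h _ _ _ _ h0 h1 h2 h3) => //; lia.
- move=> hab.
  have ok : hdepth_ok 0 h 3 by apply: (@ok3 h _ _ _ _ h0 h1 h2 h3) => //; lia.
  have [d [Pd Hd]] := @ex_max _ _ _ ok up.
  by exists d; split => //; apply: Hd.
Qed.
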